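(* Fix $\mu,\nu,\delta>0$ and $\beta\in\mathbb{R}$. For $n\in\mathbb{N}_+$ set $\beta_n=\beta/n$ and $\varepsilon_n=n+\delta/n$, and let $f^*_{\varepsilon_n,\beta_n}$ be the map $f_{\varepsilon_n}$ (with parameters $\mu,\nu,\beta_n$) written in the scaled coordinates $(\xi,\eta,\zeta)$ around any of $P_\pm,Q_\pm$ (as defined in the context). Then there is a ball around the origin on which $f^*_{\varepsilon_n,\beta_n}$ converges, as $n\to\infty$ (uniformly, together with its Taylor expansion), to the quadratic map $\xi'=\xi+2\pi\mu\eta$, $\eta'=\eta+2\pi\nu\zeta'$, $\zeta'=\zeta+\delta-2\pi^2\xi^2-2\pi\sigma\beta\eta$ (with $\sigma=+1$ for $P_\pm$, $\sigma=-1$ for $Q_\pm$), which is linearly conjugate to $M_{\varphi,a}$ in the case of $P_\pm$ and to $M_{\varphi,-a}$ in the case of $Q_\pm$, where $\varphi=\pi(32\mu^2\nu^2\delta)^{1/6}$ and $a=\beta\left(\frac{2\nu}{\delta\mu^2}\right)^{1/3}$.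
   Context: Let $\psi:\mathbb{R}\to\mathbb{R}$ be a real-analytic degree-one circle map ($\psi(z+1)=\psi(z)+1$) with $\psi(z)-z$ odd and period-one and $\psi(0)=\psi'(0)=0$. For parameters $\varepsilon,\mu,\nu,\beta$, $f_\varepsilon:\mathbb{T}^2\times\mathbb{R}\to\mathbb{T}^2\times\mathbb{R}$ is $z'=z+\varepsilon(\cos(2\pi x)-\beta\sin(2\pi y))$, $y'=y+\nu\sin(2\pi z')$, $x'=x+\mu\sin(2\pi y)+\psi(z')$ ($x,y$ mod 1). The points $P_+=(0,0,0)$, $P_-=(\tfrac12,0,0)$, $Q_+=(0,\tfrac12,0)$, $Q_-=(\tfrac12,\tfrac12,0)$ are fixed point accelerator modes at $\varepsilon=n$, with $z$-jumps $+n$ ($P_+,Q_+$) and $-n$ ($P_-,Q_-$). The scaled coordinates are $(\xi,\eta,\zeta)=n(x,y,z)$ near $P_+$, $n(\tfrac12-x,-y,-z)$ near $P_-$, $n(-x,y-\tfrac12,z)$ near $Q_+$, $n(x-\tfrac12,\tfrac12-y,-z)$ near $Q_-$, and in these coordinates the integer $z$-jump of the accelerator mode is removed. The Michelson map $M_{\varphi,a}$ is $(u,v,w)\mapsto(u',v',w')$ with $w'=w+\varphi(1-u^2-av)$, $v'=v+\varphi w'$, $u'=u+\varphi v$. *)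

(* Defs.v *)
From Stdlib Require Import Reals List.
Open Scope R_scope.

Definition R3 := (R * R * R)%type.

Inductive idx3 := I1 | I2 | I3.

Definition coord (i : idx3) (p : R3) : R :=
  match p with (a, b, c) =>
    match i with I1 => a | I2 => b | I3 => c end end.

Definition upd (p : R3) (i : idx3) (t : R) : R3 :=
  match p with (a, b, c) =>
    match i with I1 => (t, b, c) | I2 => (a, t, c) | I3 => (a, b, t) end end.

Definition real_analytic (g : R -> R) : Prop :=
  forall x0 : R, exists r : R, 0 < r /\ exists an : nat -> R,
    forall x, Rabs (x - x0) < r -> Pser an (x - x0) (g x).

(** Lift to R^3 of the map f_eps on T^2 x R (x, y taken mod 1 on the torus);
    parameters eps, mu, nu, beta. *)
Definition f_lift (psi : R -> R) (eps mu nu beta : R) (p : R3) : R3 :=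
  match p with (x, y, z) =>
    let z' := z + eps * (cos (2 * PI * x) - beta * sin (2 * PI * y)) in
    let y' := y + nu * sin (2 * PI * z') in
    let x' := x + mu * sin (2 * PI * y) + psi z' in
    (x', y', z')
  end.

Inductive accel := Pplus | Pminus | Qplus | Qminus.

Definition accel_sign (pt : accel) : R :=
  match pt with Pplus | Pminus => 1 | Qplus | Qminus => -1 end.

(** sign of the z-jump (+n for P_+, Q_+ ; -n for P_-, Q_-) *)
Definition jump_sign (pt : accel) : R :=
  match pt with Pplus | Qplus => 1 | Pminus | Qminus => -1 end.

Definition to_orig (pt : accel) (n : R) (q : R3) : R3 :=
  match q with (xi, eta, zeta) =>
    match pt with
    | Pplus  => (xi / n, eta / n, zeta / n)
    | Pminus => (/2 - xi / n, - (eta / n), - (zeta / n))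
    | Qplus  => (- (xi / n), /2 + eta / n, zeta / n)
    | Qminus => (/2 + xi / n, /2 - eta / n, - (zeta / n))
    end
  end.

Definition to_scaled (pt : accel) (n : R) (p : R3) : R3 :=
  match p with (x, y, z) =>
    match pt with
    | Pplus  => (n * x, n * y, n * z)
    | Pminus => (n * (/2 - x), n * (- y), n * (- z))
    | Qplus  => (n * (- x), n * (y - /2), n * z)
    | Qminus => (n * (x - /2), n * (/2 - y), n * (- z))
    end
  end.

(** Removal of the integer jump (s n, 0, s n) of the lift at the accelerator
    mode (the x-part is an integer, i.e. trivial on the torus). *)
Definition remove_jump (pt : accel) (n : R) (p : R3) : R3 :=
  match p with (x, y, z) =>
    (x - jump_sign pt * n, y, z - jump_sign pt * n) end.

Definition f_star (psi : R -> R) (mu nu beta delta : R) (pt : accel) (n : nat)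
  (q : R3) : R3 :=
  let nr := INR n in
  to_scaled pt nr
    (remove_jump pt nr
       (f_lift psi (nr + delta / nr) mu nu (beta / nr) (to_orig pt nr q))).

Definition quad_limit (mu nu beta delta s : R) (q : R3) : R3 :=
  match q with (xi, eta, zeta) =>
    let zeta' := zeta + delta - 2 * PI ^ 2 * xi ^ 2 - 2 * PI * s * beta * eta in
    let eta' := eta + 2 * PI * nu * zeta' in
    let xi' := xi + 2 * PI * mu * eta in
    (xi', eta', zeta')
  end.

Definition michelson (phi a : R) (p : R3) : R3 :=
  match p with (u, v, w) =>
    let w' := w + phi * (1 - u ^ 2 - a * v) in
    let v' := v + phi * w' in
    let u' := u + phi * v in
    (u', v', w')
  end.

Definition lin3 (A : idx3 -> idx3 -> R) (p : R3) : R3 :=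
  let row i := A i I1 * coord I1 p + A i I2 * coord I2 p + A i I3 * coord I3 p in
  (row I1, row I2, row I3).

Definition det3 (A : idx3 -> idx3 -> R) : R :=
    A I1 I1 * (A I2 I2 * A I3 I3 - A I2 I3 * A I3 I2)
  - A I1 I2 * (A I2 I1 * A I3 I3 - A I2 I3 * A I3 I1)
  + A I1 I3 * (A I2 I1 * A I3 I2 - A I2 I2 * A I3 I1).

Definition lin_conj (F G : R3 -> R3) : Prop :=
  exists A : idx3 -> idx3 -> R, det3 A <> 0 /\
    forall p, G (lin3 A p) = lin3 A (F p).

(** Iterated partial derivatives on a domain D:
    HasPartial D [i1; ...; ik] f g  means g = d_{ik} ... d_{i1} f on D. *)
Inductive HasPartial (D : R3 -> Prop) : list idx3 -> (R3 -> R) -> (R3 -> R) -> Prop :=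
| hp_nil (f : R3 -> R) : HasPartial D nil f f
| hp_cons (i : idx3) (l : list idx3) (f h g : R3 -> R) :
    (forall p, D p -> derivable_pt_lim (fun t => f (upd p i t)) (coord i p) (h p)) ->
    HasPartial D l h g -> HasPartial D (i :: l) f g.

Definition ball0 (r : R) (p : R3) : Prop :=
  coord I1 p ^ 2 + coord I2 p ^ 2 + coord I3 p ^ 2 < r ^ 2.

Definition conv_with_derivs (D : R3 -> Prop) (F : nat -> R3 -> R3) (G : R3 -> R3) : Prop :=
  forall (c : idx3) (l : list idx3),
    exists g : R3 -> R, HasPartial D l (fun p => coord c (G p)) g /\
    forall e : R, 0 < e -> exists N : nat, forall n : nat, (N <= n)%nat ->
      exists gn : R3 -> R, HasPartial D l (fun p => coord c (F n p)) gn /\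
        forall p, D p -> Rabs (gn p - g p) < e.

(* Main.v *)
Require Import Defs.
From Stdlib Require Import Reals List.
Open Scope R_scope.
From Stdlib Require Import Lra Lia ZArith FunctionalExtensionality.
From Coquelicot Require Import Coquelicot.
Open Scope R_scope.


Definition Smooth1 (d : nat -> R -> R) := forall k x, derivable_pt_lim (d k) x (d (S k) x).

Lemma smooth_cont d k x : Smooth1 d -> continuity_pt (d k) x.
Proof. intro H. apply derivable_continuous_pt. exact (exist _ _ (H k x)). Qed.

Lemma smooth_bound d k K : Smooth1 d -> exists C, forall t, Rabs t <= K -> Rabs (d k t) <= C.
Proof.
  intro H. destruct (Rlt_or_le K 0) as [HK|HK].
  - exists 0. intros t Ht. pose proof (Rabs_pos t). lra.
  - destruct (continuity_ab_maj (fun t => Rabs (d k t)) (-K) K) as [M [HM _]]; [lra| |].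
    + intros c _. apply (continuity_pt_comp (d k) Rabs). apply smooth_cont; auto. apply Rcontinuity_abs.
    + exists (Rabs (d k M)). intros t Ht. apply HM. apply Rabs_le_between. exact Ht.
Qed.

Lemma smooth_mvt d k s t : Smooth1 d -> exists c, (s <= c <= t \/ t <= c <= s) /\
   d k t - d k s = d (S k) c * (t - s).
Proof.
  intro H. destruct (total_order_T s t) as [[Hlt|Heq]|Hgt].
  - destruct (MVT_cor2 (d k) (d (S k)) s t Hlt) as [c [Hc1 Hc2]].
    + intros; apply H.
    + exists c. split; [left; lra | exact Hc1].
  - subst. exists t. split; [left; lra| ring].
  - destruct (MVT_cor2 (d k) (d (S k)) t s Hgt) as [c [Hc1 Hc2]].
    + intros; apply H.
    + exists c. split; [right; lra | lra].
Qed.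

Lemma smooth_lip d k K : Smooth1 d -> exists L, 0 <= L /\ forall s t, Rabs s <= K -> Rabs t <= K ->
   Rabs (d k t - d k s) <= L * Rabs (t - s).
Proof.
  intro H. destruct (smooth_bound d (S k) K H) as [C HC].
  exists (Rabs C). split; [apply Rabs_pos|]. intros s t Hs Ht.
  destruct (smooth_mvt d k s t H) as [c [Hc E]]. rewrite E, Rabs_mult.
  apply Rmult_le_compat_r; [apply Rabs_pos|].
  assert (Rabs c <= K).
  { apply Rabs_le_between. apply Rabs_le_between in Hs. apply Rabs_le_between in Ht. lra. }
  pose proof (HC c H0). pose proof (Rle_abs C). lra.
Qed.

Lemma exists_big (x : R) : exists m : nat, x < INR m.
Proof.
  destruct (Rle_or_lt x 0) as [H|H].
  - exists 1%nat. simpl. lra.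
  - destruct (archimed x) as [H1 _]. exists (Z.to_nat (up x)).
    rewrite INR_IZR_INZ, Z2Nat.id; [lra|].
    apply le_IZR. lra.
Qed.

Lemma small_inv (A e : R) : 0 < e -> exists N, forall n, (N <= n)%nat -> 1 <= INR n /\ A * / INR n < e.
Proof.
  intro He. destruct (exists_big (Rabs A / e)) as [m Hm].
  exists (S m). intros n Hn. apply le_INR in Hn. rewrite S_INR in Hn.
  pose proof (pos_INR m). split; [lra|].
  assert (0 < INR n) by lra.
  apply Rle_lt_trans with (Rabs A * / INR n).
  - apply Rmult_le_compat_r; [left; apply Rinv_0_lt_compat; lra| apply Rle_abs].
  - apply Rmult_lt_reg_r with (INR n); auto. rewrite Rmult_assoc, Rinv_l; [|lra].
    unfold Rdiv in Hm. apply Rmult_lt_compat_r with (r := e) in Hm; auto.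
    rewrite Rmult_assoc, Rinv_l in Hm; nra.
Qed.

Definition Fam1 (dn : nat -> nat -> R -> R) (d : nat -> R -> R) :=
  (forall n, Smooth1 (dn n)) /\ Smooth1 d /\
  forall k K e, 0 < e -> exists N, forall n, (N <= n)%nat -> forall t, Rabs t <= K ->
     Rabs (dn n k t - d k t) < e.

Lemma Fam1_shift dn d : Fam1 dn d -> Fam1 (fun n k => dn n (S k)) (fun k => d (S k)).
Proof.
  intros [H1 [H2 H3]]. split; [|split].
  - intros n k x. apply H1.
  - intros k x. apply H2.
  - intros k K e He. apply (H3 (S k) K e He).
Qed.


Lemma dpl_lin c x : derivable_pt_lim (fun t => t * c) x c.
Proof. apply is_derive_Reals. auto_derive; auto; ring. Qed.

Lemma dpl_scale_comp d k c a x : Smooth1 d ->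
  derivable_pt_lim (fun t => a * d k (t * c)) x (a * (d (S k) (x*c) * c)).
Proof.
  intro H. apply (derivable_pt_lim_scal (fun t => d k (t * c)) a x).
  apply (derivable_pt_lim_comp (fun t => t * c) (d k) x c (d (S k) (x * c))).
  apply dpl_lin. apply H.
Qed.

Lemma pow_le1 a k : 0 <= a -> a <= 1 -> a ^ k <= 1.
Proof. intros. induction k; simpl; [lra|]. pose proof (pow_le a k H). nra. Qed.

Definition scl (d : nat -> R -> R) (n k : nat) (t : R) : R :=
  INR n * (/ INR n) ^ k * d k (t * / INR n).
Definition scl_lim (d : nat -> R -> R) (k : nat) (t : R) : R :=
  match k with 0%nat => t * d 1%nat 0 | 1%nat => d 1%nat 0 | _ => 0 end.

Lemma Smooth1_scl d n : Smooth1 d -> Smooth1 (scl d n).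
Proof.
  intros H k x. unfold scl.
  replace (INR n * (/ INR n) ^ S k * d (S k) (x * / INR n)) with
    (INR n * (/ INR n) ^ k * (d (S k) (x * / INR n) * / INR n)) by (simpl; ring).
  apply dpl_scale_comp; auto.
Qed.

Lemma Smooth1_scl_lim d : Smooth1 (scl_lim d).
Proof.
  intros k x. destruct k as [|[|k]]; simpl.
  - change (derivable_pt_lim (fun t => t * d 1%nat 0) x (d 1%nat 0)). apply dpl_lin.
  - apply derivable_pt_lim_const.
  - apply derivable_pt_lim_const.
Qed.

Lemma Fam1_scl d : Smooth1 d -> d 0%nat 0 = 0 -> Fam1 (scl d) (scl_lim d).
Proof.
  intros H H0. split; [intro; apply Smooth1_scl; auto|]. split; [apply Smooth1_scl_lim|].
  intros k K e He. set (K' := Rabs K).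
  destruct (smooth_lip d 1 K' H) as [L1 [HL1 HL]].
  destruct (smooth_bound d k K' H) as [C HC].
  destruct (small_inv (K' * K' * L1 + K' * L1 + Rabs C) e He) as [N HN].
  exists N. intros n Hn t Ht. destruct (HN n Hn) as [Hn1 Hsm].
  assert (HK' : Rabs t <= K') by (unfold K'; pose proof (Rle_abs K); lra).
  assert (K'0 : 0 <= K') by apply Rabs_pos.
  set (x := t * / INR n).
  assert (Hnz : INR n <> 0) by lra.
  assert (Hi : 0 < / INR n) by (apply Rinv_0_lt_compat; lra).
  assert (Hi1 : / INR n <= 1) by (rewrite <- Rinv_1; apply Rinv_le_contravar; lra).
  assert (Hx : Rabs x = Rabs t * / INR n) by (unfold x; rewrite Rabs_mult, (Rabs_pos_eq (/ INR n)); lra).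
  assert (HxK : Rabs x <= K') by (rewrite Hx; nra).
  assert (HxK2 : Rabs x <= K' * / INR n) by (rewrite Hx; nra).
  assert (Hsm' : (K' * K' * L1 + K' * L1 + Rabs C) * / INR n < e) by exact Hsm.
  assert (HCp : 0 <= Rabs C) by apply Rabs_pos.
  assert (HA : K' * K' * L1 * / INR n + K' * L1 * / INR n + Rabs C * / INR n < e) by nra.
  assert (h1 : 0 <= K' * K' * L1 * / INR n) by (repeat apply Rmult_le_pos; lra).
  assert (h2 : 0 <= K' * L1 * / INR n) by (repeat apply Rmult_le_pos; lra).
  assert (h3 : 0 <= Rabs C * / INR n) by (repeat apply Rmult_le_pos; lra).
  unfold scl, scl_lim. fold x. destruct k as [|[|k]].
  - destruct (smooth_mvt d 0 0 x H) as [c [Hc E]]. rewrite H0 in E.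
    assert (Hc' : Rabs (c - 0) <= Rabs x).
    { rewrite Rminus_0_r; apply Rabs_le_between.
      pose proof (proj1 (Rabs_le_between x (Rabs x)) (Rle_refl _)). lra. }
    assert (Hd : d 0%nat x = d 1%nat c * x) by lra.
    rewrite pow_O, Rmult_1_r, Hd.
    replace (INR n * (d 1%nat c * x) - t * d 1%nat 0) with (t * (d 1%nat c - d 1%nat 0))
      by (unfold x; field; auto).
    rewrite Rabs_mult.
    assert (Hcl : Rabs (d 1%nat c - d 1%nat 0) <= L1 * Rabs (c - 0)).
    { apply HL. rewrite Rabs_R0; lra. rewrite Rminus_0_r in Hc'. lra. }
    apply Rle_lt_trans with (K' * (L1 * (K' * / INR n))); [|nra].
    apply Rmult_le_compat; try apply Rabs_pos; auto.
    apply Rle_trans with (L1 * Rabs (c - 0)); auto. apply Rmult_le_compat_l; lra.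
  - simpl. replace (INR n * (/ INR n * 1) * d 1%nat x - d 1%nat 0) with (d 1%nat x - d 1%nat 0)
      by (field; auto).
    apply Rle_lt_trans with (L1 * Rabs (x - 0)).
    + apply HL; auto. rewrite Rabs_R0; lra.
    + rewrite Rminus_0_r. nra.
  - rewrite Rminus_0_r.
    replace (INR n * (/ INR n) ^ S (S k) * d (S (S k)) x) with
       (/ INR n * ((/ INR n) ^ k * d (S (S k)) x)) by (simpl; field; auto).
    rewrite Rabs_mult, (Rabs_pos_eq (/ INR n)) by lra.
    assert (Hp : 0 <= (/ INR n) ^ k <= 1) by (split; [apply pow_le; lra | apply pow_le1; lra]).
    rewrite Rabs_mult, (Rabs_pos_eq ((/ INR n) ^ k)) by lra.
    pose proof (HC x HxK). pose proof (Rabs_pos (d (S (S k)) x)).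
    apply Rle_lt_trans with (Rabs C * / INR n); [|lra].
    assert ((/ INR n) ^ k * Rabs (d (S (S k)) x) <= Rabs C).
    { pose proof (Rle_abs C). nra. }
    nra.
Qed.


Definition sd (a b : R) (k : nat) (t : R) : R := a ^ k * sin (a * t + b + INR k * (PI / 2)).

Lemma Smooth1_sd a b : Smooth1 (sd a b).
Proof.
  intros k x. unfold sd. apply is_derive_Reals. auto_derive; auto.
  rewrite S_INR, cos_sin.
  replace (PI / 2 + (a * x + b + INR k * (PI / 2))) with (a * x + b + (INR k + 1) * (PI / 2)) by ring.
  simpl. ring.
Qed.

Lemma sd_0 a : sd a 0 0 0 = 0.
Proof. unfold sd. simpl. replace (a * 0 + 0 + 0 * (PI / 2)) with 0 by ring. rewrite sin_0. ring. Qed.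

Lemma sd_1 a : sd a 0 1 0 = a.
Proof. unfold sd. simpl. replace (a * 0 + 0 + 1 * (PI / 2)) with (PI/2) by ring. rewrite sin_PI2. ring. Qed.

Lemma sum_abs_ge (f : nat -> R) n N : (n <= N)%nat -> Rabs (f n) <= sum_f_R0 (fun i => Rabs (f i)) N.
Proof.
  induction N; intro H.
  - inversion H. simpl. lra.
  - simpl. inversion H.
    + subst. assert (0 <= sum_f_R0 (fun i => Rabs (f i)) N) by (apply cond_pos_sum; intro; apply Rabs_pos). lra.
    + pose proof (IHN H1). pose proof (Rabs_pos (f (S N))). lra.
Qed.

Lemma pser_bounded an y l : Pser an y l -> exists M, forall n, Rabs (an n * y ^ n) <= M.
Proof.
  intro H. destruct (H 1 Rlt_0_1) as [N HN].
  set (f := fun n => an n * y ^ n).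
  exists (2 + sum_f_R0 (fun i => Rabs (f i)) N). intro n.
  assert (0 <= sum_f_R0 (fun i => Rabs (f i)) N) by (apply cond_pos_sum; intro; apply Rabs_pos).
  change (Rabs (f n) <= 2 + sum_f_R0 (fun i => Rabs (f i)) N).
  destruct (le_lt_dec n N) as [Hn|Hn].
  - pose proof (sum_abs_ge f n N Hn). lra.
  - destruct n as [|n]; [lia|].
    pose proof (HN (S n) ltac:(lia)). pose proof (HN n ltac:(lia)).
    unfold R_dist in *. fold f in H1, H2.
    assert (E : sum_f_R0 f (S n) = sum_f_R0 f n + f (S n)) by reflexivity. rewrite E in H1.
    replace (f (S n)) with ((sum_f_R0 f n + f (S n) - l) - (sum_f_R0 f n - l)) by ring.
    apply Rle_trans with (Rabs (sum_f_R0 f n + f (S n) - l) + Rabs (sum_f_R0 f n - l)).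
    + unfold Rminus at 1. eapply Rle_trans; [apply Rabs_triang|]. rewrite Rabs_Ropp. lra.
    + lra.
Qed.

Lemma analytic_smooth psi : real_analytic psi -> Smooth1 (fun k => Derive_n psi k).
Proof.
  intros Han k x. destruct (Han x) as [r [Hr [an Hser]]].
  set (g := fun y => PSeries an (y + - x)).
  assert (Hloc : forall y, Rabs (y - x) < r -> psi y = g y).
  { intros y Hy. unfold g. symmetry. apply is_pseries_unique. apply is_pseries_Reals. apply Hser; auto. }
  assert (Hrad : Rbar_lt 0 (CV_radius an)).
  { destruct (pser_bounded an (r/2) (psi (x + r/2))) as [M HM].
    - replace (r/2) with (x + r/2 - x) at 1 by ring. apply Hser.
      replace (x + r / 2 - x) with (r/2) by ring. rewrite Rabs_pos_eq; lra.
    - destruct (CV_radius_bounded an) as [Hub _].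
      assert (Hle : Rbar_le (r/2) (CV_radius an)) by (apply Hub; exists M; auto).
      eapply Rbar_lt_le_trans; [|exact Hle]. simpl. lra. }
  assert (HP : locally x (fun y => psi y = g y)).
  { exists (mkposreal r Hr). intros y Hy. apply Hloc. exact Hy. }
  assert (HD : locally x (fun t => Derive_n g k t = Derive_n psi k t)).
  { generalize (locally_locally x _ HP). apply filter_imp. intros y Hy.
    symmetry. apply Derive_n_ext_loc. exact Hy. }
  assert (Hex : ex_derive (Derive_n psi k) x).
  { apply (ex_derive_ext_loc (Derive_n g k)); auto.
    assert (E : forall t, Derive_n g k t = Derive_n (PSeries an) k (t + - x)).
    { intro t. unfold g. apply Derive_n_comp_trans. }
    apply (ex_derive_ext (fun t => Derive_n (PSeries an) k (t + - x))).
    { intro t; symmetry; apply E. }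
    apply (ex_derive_comp (Derive_n (PSeries an) k) (fun t => t + - x)).
    - rewrite Rplus_opp_r. apply (ex_derive_n_PSeries (S k)). rewrite Rabs_R0. exact Hrad.
    - auto_derive. auto. }
  apply is_derive_Reals. simpl. apply Derive_correct. exact Hex.
Qed.


Definition D3 : R3 -> Prop := fun _ => True.
Definition pd (i : idx3) (f : R3 -> R) (p : R3) : R := Derive (fun t => f (upd p i t)) (coord i p).
Definition dvb i f := forall p, derivable_pt_lim (fun t => f (upd p i t)) (coord i p) (pd i f p).

Lemma upd_coord p i : upd p i (coord i p) = p.
Proof. destruct p as [[a b] c]; destruct i; reflexivity. Qed.

Lemma dvb_intro i f h : (forall p, derivable_pt_lim (fun t => f (upd p i t)) (coord i p) (h p)) ->
  dvb i f /\ pd i f = h.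
Proof.
  intro H. assert (E : forall p, pd i f p = h p).
  { intro p. unfold pd. apply is_derive_unique. apply is_derive_Reals. apply H. }
  split. - intro p. rewrite E. apply H. - apply functional_extensionality; exact E.
Qed.

Lemma HP_cons_elim i l f g : HasPartial D3 (i :: l) f g -> dvb i f /\ HasPartial D3 l (pd i f) g.
Proof.
  intro H. inversion H as [|i0 l0 f0 h g0 Hd Hr]; subst.
  destruct (dvb_intro i f h) as [K1 K2]. { intro p. apply Hd. exact I. }
  split; auto. rewrite K2. auto.
Qed.

Lemma HP_cons_intro i l f g : dvb i f -> HasPartial D3 l (pd i f) g -> HasPartial D3 (i :: l) f g.
Proof. intros. econstructor; eauto. Qed.

Lemma HP_nil_elim f g : HasPartial D3 nil f g -> g = f.
Proof. intro H. inversion H. auto. Qed.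

Lemma HP_restrict D l f g : HasPartial D3 l f g -> HasPartial D l f g.
Proof. intro H. induction H; [constructor|]. econstructor; [|eauto]. intros; apply H; exact I. Qed.

Definition Bl1 (p : R3) : Prop := ball0 1 p.

Definition Pl (l : list idx3) (F : nat -> R3 -> R) (G : R3 -> R) : Prop :=
  exists g, HasPartial D3 l G g /\ (exists M, forall p, Bl1 p -> Rabs (g p) <= M) /\
   forall e, 0 < e -> exists N, forall n, (N <= n)%nat ->
     exists gn, HasPartial D3 l (F n) gn /\ forall p, Bl1 p -> Rabs (gn p - g p) < e.

Definition Fk (k : nat) F G := forall l, (length l <= k)%nat -> Pl l F G.

Lemma Pl_nil_intro F G : (exists M, forall p, Bl1 p -> Rabs (G p) <= M) ->
  (forall e, 0 < e -> exists N, forall n, (N <= n)%nat -> forall p, Bl1 p -> Rabs (F n p - G p) < e) ->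
  Pl nil F G.
Proof.
  intros HM Hc. exists G. split; [constructor|]. split; auto.
  intros e He. destruct (Hc e He) as [N HN]. exists N. intros n Hn. exists (F n).
  split; [constructor|]. auto.
Qed.

Lemma Pl_nil_elim F G : Pl nil F G -> (exists M, forall p, Bl1 p -> Rabs (G p) <= M) /\
  (forall e, 0 < e -> exists N, forall n, (N <= n)%nat -> forall p, Bl1 p -> Rabs (F n p - G p) < e).
Proof.
  intros [g [Hg [HM Hc]]]. apply HP_nil_elim in Hg. subst g. split; auto.
  intros e He. destruct (Hc e He) as [N HN]. exists N. intros n Hn.
  destruct (HN n Hn) as [gn [Hgn Hb]]. apply HP_nil_elim in Hgn. subst gn. auto.
Qed.

Lemma Fk_0 F G : Pl nil F G -> Fk 0 F G.
Proof. intros H l Hl. destruct l; [auto | simpl in Hl; lia]. Qed.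

Lemma Fk_nil k F G : Fk k F G -> Pl nil F G.
Proof. intro H. apply H. simpl. lia. Qed.

Lemma Fk_mono k F G : Fk (S k) F G -> Fk k F G.
Proof. intros H l Hl. apply H. lia. Qed.

Lemma Fk_S k F G : Pl nil F G -> (forall i, dvb i G) ->
  (forall i, exists N, forall n, (N <= n)%nat -> dvb i (F n)) ->
  (forall i, exists Fd, Fk k Fd (pd i G) /\ exists N, forall n, (N <= n)%nat -> pd i (F n) = Fd n) ->
  Fk (S k) F G.
Proof.
  intros H0 HG HF HD l Hl. destruct l as [|i l]; [auto|]. simpl in Hl.
  destruct (HD i) as [Fd [HFd [N2 HN2]]].
  destruct (HFd l ltac:(lia)) as [g [Hg [HM Hc]]].
  exists g. split; [apply HP_cons_intro; auto|]. split; auto.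
  intros e He. destruct (Hc e He) as [N1 HN1]. destruct (HF i) as [N3 HN3].
  exists (max N1 (max N2 N3)). intros n Hn.
  destruct (HN1 n ltac:(lia)) as [gn [Hgn Hb]]. exists gn. split; auto.
  apply HP_cons_intro; [apply HN3; lia|]. rewrite HN2 by lia. auto.
Qed.

Lemma Fk_inv k F G : Fk (S k) F G -> Pl nil F G /\ (forall i, dvb i G) /\
  (forall i, exists N, forall n, (N <= n)%nat -> dvb i (F n)) /\
  (forall i, Fk k (fun n => pd i (F n)) (pd i G)).
Proof.
  intro H. split; [apply H; simpl; lia|]. split; [|split].
  - intro i. destruct (H (i :: nil) ltac:(simpl; lia)) as [g [Hg _]].
    apply HP_cons_elim in Hg. tauto.
  - intro i. destruct (H (i :: nil) ltac:(simpl; lia)) as [g [Hg [_ Hc]]].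
    destruct (Hc 1 Rlt_0_1) as [N HN]. exists N. intros n Hn.
    destruct (HN n Hn) as [gn [Hgn _]]. apply HP_cons_elim in Hgn. tauto.
  - intros i l Hl. destruct (H (i :: l) ltac:(simpl; lia)) as [g [Hg [HM Hc]]].
    apply HP_cons_elim in Hg. exists g. split; [tauto|]. split; auto.
    intros e He. destruct (Hc e He) as [N HN]. exists N. intros n Hn.
    destruct (HN n Hn) as [gn [Hgn Hb]]. apply HP_cons_elim in Hgn. exists gn. split; [tauto|auto].
Qed.

Lemma Fk_ev k F F' G : Fk k F G -> (exists N, forall n, (N <= n)%nat -> F n = F' n) -> Fk k F' G.
Proof.
  intros H [N0 HN0] l Hl. destruct (H l Hl) as [g [Hg [HM Hc]]]. exists g. split; auto. split; auto.
  intros e He. destruct (Hc e He) as [N HN]. exists (max N N0). intros n Hn.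
  rewrite <- HN0 by lia. apply HN; lia.
Qed.

Definition gadd (A B : R3 -> R) : R3 -> R := fun p => A p + B p.
Definition gmul (A B : R3 -> R) : R3 -> R := fun p => A p * B p.
Definition gcst (c : R) : R3 -> R := fun _ => c.
Definition gcomp (d : nat -> R -> R) (A : R3 -> R) : R3 -> R := fun p => d 0%nat (A p).
Definition fadd (A B : nat -> R3 -> R) : nat -> R3 -> R := fun n => gadd (A n) (B n).
Definition fmul (A B : nat -> R3 -> R) : nat -> R3 -> R := fun n => gmul (A n) (B n).
Definition fcst (c : nat -> R) : nat -> R3 -> R := fun n => gcst (c n).
Definition fco (j : idx3) : nat -> R3 -> R := fun _ => coord j.
Definition fcomp (dn : nat -> nat -> R -> R) (A : nat -> R3 -> R) : nat -> R3 -> R :=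
  fun n => gcomp (dn n) (A n).
Definition pdf i (F : nat -> R3 -> R) : nat -> R3 -> R := fun n => pd i (F n).

Definition idx_eqb (i j : idx3) : bool :=
  match i, j with I1, I1 | I2, I2 | I3, I3 => true | _, _ => false end.

Lemma pd_const i c : dvb i (gcst c) /\ pd i (gcst c) = gcst 0.
Proof. apply dvb_intro. intro p. unfold gcst. apply derivable_pt_lim_const. Qed.

Lemma pd_coord i j : dvb i (coord j) /\ pd i (coord j) = gcst (if idx_eqb i j then 1 else 0).
Proof.
  apply dvb_intro. intros [[a b] c]. unfold gcst.
  destruct i, j; simpl; first [exact (derivable_pt_lim_id _) | apply derivable_pt_lim_const].
Qed.

Lemma pd_add i A B : dvb i A -> dvb i B -> dvb i (gadd A B) /\ pd i (gadd A B) = gadd (pd i A) (pd i B).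
Proof.
  intros HA HB. apply dvb_intro. intro p. unfold gadd.
  exact (derivable_pt_lim_plus _ _ _ _ _ (HA p) (HB p)).
Qed.

Lemma pd_mul i A B : dvb i A -> dvb i B ->
  dvb i (gmul A B) /\ pd i (gmul A B) = gadd (gmul (pd i A) B) (gmul A (pd i B)).
Proof.
  intros HA HB. apply dvb_intro. intro p. unfold gadd, gmul.
  pose proof (derivable_pt_lim_mult _ _ _ _ _ (HA p) (HB p)) as H.
  cbv beta in H. rewrite upd_coord in H. exact H.
Qed.

Lemma pd_comp i d A : Smooth1 d -> dvb i A ->
  dvb i (gcomp d A) /\ pd i (gcomp d A) = gmul (gcomp (fun k => d (S k)) A) (pd i A).
Proof.
  intros Hd HA. apply dvb_intro. intro p. unfold gcomp, gmul.
  pose proof (Hd 0%nat (A p)) as H1. rewrite <- (upd_coord p i) in H1 at 1.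
  exact (derivable_pt_lim_comp _ _ _ _ _ (HA p) H1).
Qed.

Lemma B1_coord p j : Bl1 p -> Rabs (coord j p) <= 1.
Proof.
  unfold Bl1, ball0. intro H. apply Rabs_le_between.
  destruct p as [[a b] c]. destruct j; simpl in *; nra.
Qed.


Definition cvr (cn : nat -> R) (c : R) :=
  forall e, 0 < e -> exists N, forall n, (N <= n)%nat -> Rabs (cn n - c) < e.

Lemma Pl_nil_const cn c : cvr cn c -> Pl nil (fcst cn) (gcst c).
Proof.
  intro Hc. apply Pl_nil_intro.
  - exists (Rabs c). intros. unfold gcst. lra.
  - intros e He. destruct (Hc e He) as [N HN]. exists N. intros n Hn p _. apply HN; auto.
Qed.

Lemma Fk_const k : forall cn c, cvr cn c -> Fk k (fcst cn) (gcst c).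
Proof.
  induction k; intros cn c Hc.
  - apply Fk_0, Pl_nil_const; auto.
  - apply Fk_S.
    + apply Pl_nil_const; auto.
    + intro i; apply pd_const.
    + intro i; exists 0%nat; intros; apply (pd_const i (cn n)).
    + intro i. exists (fcst (fun _ => 0)). split.
      * rewrite (proj2 (pd_const i c)). apply IHk. intros e He. exists 0%nat. intros.
        rewrite Rminus_0_r, Rabs_R0; auto.
      * exists 0%nat; intros n _. unfold fcst at 1. rewrite (proj2 (pd_const i (cn n))). reflexivity.
Qed.

Lemma Pl_nil_coord j : Pl nil (fco j) (coord j).
Proof.
  apply Pl_nil_intro.
  - exists 1. intros; apply B1_coord; auto.
  - intros e He. exists 0%nat. intros. unfold fco. rewrite Rminus_diag, Rabs_R0. auto.
Qed.

Lemma Fk_coord k j : Fk k (fco j) (coord j).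
Proof.
  destruct k.
  - apply Fk_0, Pl_nil_coord.
  - apply Fk_S.
    + apply Pl_nil_coord.
    + intro i; apply pd_coord.
    + intro i; exists 0%nat; intros; apply pd_coord.
    + intro i. exists (fcst (fun _ => if idx_eqb i j then 1 else 0)). split.
      * rewrite (proj2 (pd_coord i j)). apply Fk_const. intros e He. exists 0%nat. intros.
        rewrite Rminus_diag, Rabs_R0; auto.
      * exists 0%nat; intros n _. unfold fco. rewrite (proj2 (pd_coord i j)). reflexivity.
Qed.

Lemma Pl_nil_add A GA B GB : Pl nil A GA -> Pl nil B GB -> Pl nil (fadd A B) (gadd GA GB).
Proof.
  intros HA HB. apply Pl_nil_elim in HA as [[MA HMA] cA]. apply Pl_nil_elim in HB as [[MB HMB] cB].
  apply Pl_nil_intro.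
  - exists (MA + MB). intros p Hp. unfold gadd. eapply Rle_trans; [apply Rabs_triang|].
    pose proof (HMA p Hp); pose proof (HMB p Hp); lra.
  - intros e He. destruct (cA (e/2) ltac:(lra)) as [N1 H1]. destruct (cB (e/2) ltac:(lra)) as [N2 H2].
    exists (max N1 N2). intros n Hn p Hp. unfold fadd, gadd.
    replace (A n p + B n p - (GA p + GB p)) with ((A n p - GA p) + (B n p - GB p)) by ring.
    eapply Rle_lt_trans; [apply Rabs_triang|].
    pose proof (H1 n ltac:(lia) p Hp); pose proof (H2 n ltac:(lia) p Hp); lra.
Qed.

Lemma mul_est a A b B eta M : Rabs (a - A) < eta -> Rabs (b - B) < eta -> Rabs A <= M ->
  Rabs B <= M -> eta <= 1 -> Rabs (a * b - A * B) <= eta * (2 * M + 1).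
Proof.
  intros H1 H2 H3 H4 H5.
  replace (a * b - A * B) with ((a - A) * b + A * (b - B)) by ring.
  eapply Rle_trans; [apply Rabs_triang|]. rewrite !Rabs_mult.
  assert (Hb : Rabs b <= M + 1).
  { replace b with (B + (b - B)) by ring. eapply Rle_trans; [apply Rabs_triang|]. lra. }
  pose proof (Rabs_pos (a - A)). pose proof (Rabs_pos A). pose proof (Rabs_pos b).
  pose proof (Rabs_pos (b - B)).
  assert (Rabs (a - A) * Rabs b <= eta * (M + 1)) by (apply Rmult_le_compat; lra).
  assert (Rabs A * Rabs (b - B) <= M * eta) by (apply Rmult_le_compat; lra).
  lra.
Qed.

Lemma Pl_nil_mul A GA B GB : Pl nil A GA -> Pl nil B GB -> Pl nil (fmul A B) (gmul GA GB).
Proof.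
  intros HA HB. apply Pl_nil_elim in HA as [[MA HMA] cA]. apply Pl_nil_elim in HB as [[MB HMB] cB].
  set (M := Rabs MA + Rabs MB).
  assert (HM0 : 0 <= M) by (unfold M; pose proof (Rabs_pos MA); pose proof (Rabs_pos MB); lra).
  assert (HA' : forall p, Bl1 p -> Rabs (GA p) <= M).
  { intros p Hp. pose proof (HMA p Hp). pose proof (Rle_abs MA). pose proof (Rabs_pos MB). unfold M; lra. }
  assert (HB' : forall p, Bl1 p -> Rabs (GB p) <= M).
  { intros p Hp. pose proof (HMB p Hp). pose proof (Rle_abs MB). pose proof (Rabs_pos MA). unfold M; lra. }
  apply Pl_nil_intro.
  - exists (M * M). intros p Hp. unfold gmul. rewrite Rabs_mult.
    apply Rmult_le_compat; try apply Rabs_pos; auto.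
  - intros e He. set (eta := Rmin 1 (e / (2 * M + 2))).
    assert (He2 : 0 < e / (2 * M + 2)) by (apply Rdiv_lt_0_compat; lra).
    assert (Heta : 0 < eta) by (unfold eta; apply Rmin_glb_lt; lra).
    assert (Heta1 : eta <= 1) by apply Rmin_l.
    assert (Heta2 : eta <= e / (2 * M + 2)) by apply Rmin_r.
    destruct (cA eta Heta) as [N1 H1]. destruct (cB eta Heta) as [N2 H2].
    exists (max N1 N2). intros n Hn p Hp. unfold fmul, gmul.
    eapply Rle_lt_trans.
    + apply (mul_est _ _ _ _ eta M); auto. apply H1; [lia|auto]. apply H2; [lia|auto].
    + assert (eta * (2 * M + 2) <= e).
      { apply Rmult_le_compat_r with (r := 2 * M + 2) in Heta2; [|lra].
        unfold Rdiv in Heta2. rewrite Rmult_assoc, Rinv_l in Heta2; lra. }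
      nra.
Qed.

Lemma Pl_nil_comp dn d A GA : Fam1 dn d -> Pl nil A GA -> Pl nil (fcomp dn A) (gcomp d GA).
Proof.
  intros [Hdn [Hd Hc]] HA. apply Pl_nil_elim in HA as [[MA HMA] cA].
  set (K := Rabs MA + 1).
  assert (HGK : forall p, Bl1 p -> Rabs (GA p) <= K).
  { intros p Hp. pose proof (HMA p Hp). pose proof (Rle_abs MA). unfold K; lra. }
  destruct (smooth_lip d 0 (K + 1) Hd) as [L [HL0 HL]].
  destruct (smooth_bound d 0 K Hd) as [C HC].
  apply Pl_nil_intro.
  - exists C. intros p Hp. unfold gcomp. apply HC. auto.
  - intros e He. set (eta := Rmin 1 (e / (2 * (L + 1)))).
    assert (He2 : 0 < e / (2 * (L + 1))) by (apply Rdiv_lt_0_compat; lra).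
    assert (Heta : 0 < eta) by (unfold eta; apply Rmin_glb_lt; lra).
    assert (Heta1 : eta <= 1) by apply Rmin_l.
    assert (Heta2 : eta <= e / (2 * (L + 1))) by apply Rmin_r.
    assert (HLe : L * eta <= e / 2).
    { apply Rle_trans with ((L + 1) * eta); [nra|].
      apply Rmult_le_compat_l with (r := L + 1) in Heta2; [|lra].
      replace ((L + 1) * (e / (2 * (L + 1)))) with (e / 2) in Heta2 by (field; lra). lra. }
    destruct (cA eta Heta) as [N1 H1]. destruct (Hc 0%nat (K + 1) (e / 2) ltac:(lra)) as [N2 H2].
    exists (max N1 N2). intros n Hn p Hp. unfold fcomp, gcomp.
    pose proof (H1 n ltac:(lia) p Hp) as Ha. pose proof (HGK p Hp) as Hg.
    assert (HaK : Rabs (A n p) <= K + 1).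
    { replace (A n p) with (GA p + (A n p - GA p)) by ring. eapply Rle_trans; [apply Rabs_triang|]. lra. }
    replace (dn n 0%nat (A n p) - d 0%nat (GA p)) with
      ((dn n 0%nat (A n p) - d 0%nat (A n p)) + (d 0%nat (A n p) - d 0%nat (GA p))) by ring.
    eapply Rle_lt_trans; [apply Rabs_triang|].
    pose proof (H2 n ltac:(lia) (A n p) HaK).
    assert (Rabs (d 0%nat (A n p) - d 0%nat (GA p)) <= L * Rabs (A n p - GA p)).
    { apply HL; lra. }
    assert (L * Rabs (A n p - GA p) <= L * eta) by (apply Rmult_le_compat_l; lra).
    lra.
Qed.


Lemma Fk_add k : forall A GA B GB, Fk k A GA -> Fk k B GB -> Fk k (fadd A B) (gadd GA GB).
Proof.
  induction k; intros A GA B GB HA HB.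
  - apply Fk_0, Pl_nil_add; eapply Fk_nil; eauto.
  - destruct (Fk_inv _ _ _ HA) as [A0 [AG [AF AD]]].
    destruct (Fk_inv _ _ _ HB) as [B0 [BG [BF BD]]].
    apply Fk_S.
    + apply Pl_nil_add; auto.
    + intro i. apply (pd_add i GA GB (AG i) (BG i)).
    + intro i. destruct (AF i) as [N1 H1]. destruct (BF i) as [N2 H2].
      exists (max N1 N2). intros n Hn. apply (pd_add i (A n) (B n)); [apply H1|apply H2]; lia.
    + intro i. exists (fadd (pdf i A) (pdf i B)). split.
      * rewrite (proj2 (pd_add i GA GB (AG i) (BG i))). apply IHk; [exact (AD i)|exact (BD i)].
      * destruct (AF i) as [N1 H1]. destruct (BF i) as [N2 H2].
        exists (max N1 N2). intros n Hn.
        apply (pd_add i (A n) (B n)); [apply H1|apply H2]; lia.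
Qed.

Lemma Fk_mul k : forall A GA B GB, Fk k A GA -> Fk k B GB -> Fk k (fmul A B) (gmul GA GB).
Proof.
  induction k; intros A GA B GB HA HB.
  - apply Fk_0, Pl_nil_mul; eapply Fk_nil; eauto.
  - destruct (Fk_inv _ _ _ HA) as [A0 [AG [AF AD]]].
    destruct (Fk_inv _ _ _ HB) as [B0 [BG [BF BD]]].
    apply Fk_S.
    + apply Pl_nil_mul; auto.
    + intro i. apply (pd_mul i GA GB (AG i) (BG i)).
    + intro i. destruct (AF i) as [N1 H1]. destruct (BF i) as [N2 H2].
      exists (max N1 N2). intros n Hn. apply (pd_mul i (A n) (B n)); [apply H1|apply H2]; lia.
    + intro i. exists (fadd (fmul (pdf i A) B) (fmul A (pdf i B))). split.
      * rewrite (proj2 (pd_mul i GA GB (AG i) (BG i))).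
        apply Fk_add; apply IHk.
        -- exact (AD i).
        -- apply Fk_mono; exact HB.
        -- apply Fk_mono; exact HA.
        -- exact (BD i).
      * destruct (AF i) as [N1 H1]. destruct (BF i) as [N2 H2].
        exists (max N1 N2). intros n Hn.
        apply (pd_mul i (A n) (B n)); [apply H1|apply H2]; lia.
Qed.

Lemma Fk_comp k : forall dn d A GA, Fam1 dn d -> Fk k A GA -> Fk k (fcomp dn A) (gcomp d GA).
Proof.
  induction k; intros dn d A GA Hf HA.
  - apply Fk_0, Pl_nil_comp; auto; eapply Fk_nil; eauto.
  - destruct (Fk_inv _ _ _ HA) as [A0 [AG [AF AD]]].
    destruct Hf as [Hdn [Hd Hc]] eqn:Hf'.
    apply Fk_S.
    + apply Pl_nil_comp; auto.
    + intro i. apply (pd_comp i d GA Hd (AG i)).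
    + intro i. destruct (AF i) as [N1 H1].
      exists N1. intros n Hn. apply (pd_comp i (dn n) (A n)); auto.
    + intro i. exists (fmul (fcomp (fun n k => dn n (S k)) A) (pdf i A)). split.
      * rewrite (proj2 (pd_comp i d GA Hd (AG i))).
        apply Fk_mul; [|exact (AD i)]. apply IHk; [apply Fam1_shift; auto|]. apply Fk_mono; auto.
      * destruct (AF i) as [N1 H1].
        exists N1. intros n Hn. apply (pd_comp i (dn n) (A n)); auto.
Qed.

Definition Finf F G := forall k, Fk k F G.


Lemma cvr_inv2 c0 c1 : cvr (fun n => c0 + c1 * (/ INR n) ^ 2) c0.
Proof.
  intros e He. destruct (small_inv (Rabs c1) e He) as [N HN]. exists N. intros n Hn.
  destruct (HN n Hn) as [H1 H2].
  assert (Hi : 0 < / INR n) by (apply Rinv_0_lt_compat; lra).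
  assert (Hi1 : / INR n <= 1) by (rewrite <- Rinv_1; apply Rinv_le_contravar; lra).
  replace (c0 + c1 * (/ INR n) ^ 2 - c0) with (c1 * (/ INR n) ^ 2) by ring.
  rewrite Rabs_mult, (Rabs_pos_eq ((/ INR n) ^ 2)) by (apply pow_le; lra).
  pose proof (Rabs_pos c1). simpl. nra.
Qed.

Lemma cvr_cst c : cvr (fun _ => c) c.
Proof. intros e He. exists 0%nat. intros. rewrite Rminus_diag, Rabs_R0. auto. Qed.

Section Fams.
Variables (psi : R -> R) (mu nu delta beta sg kap : R).

Definition sdp := sd PI 0.
Definition sd2 := sd (2 * PI) 0.
Definition dpsi := fun k => Derive_n psi k.

Definition s1f := fcomp (scl sdp) (fco I1).
Definition s1g := gcomp (scl_lim sdp) (coord I1).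
Definition Sef := fcomp (scl sd2) (fco I2).
Definition Seg := gcomp (scl_lim sd2) (coord I2).
Definition Zf := fadd (fadd (fadd (fadd (fco I3) (fmul (fcst (fun _ => -2)) (fmul s1f s1f)))
               (fcst (fun _ => delta)))
               (fmul (fcst (fun n => 0 + (-2 * delta) * (/ INR n) ^ 2)) (fmul s1f s1f)))
               (fmul (fcst (fun n => - (sg * beta) + (- (sg * beta) * delta) * (/ INR n) ^ 2)) Sef).
Definition Zg := gadd (gadd (gadd (gadd (coord I3) (gmul (gcst (-2)) (gmul s1g s1g)))
               (gcst delta))
               (gmul (gcst 0) (gmul s1g s1g)))
               (gmul (gcst (- (sg * beta))) Seg).
Definition F2f := fadd (fco I2) (fmul (fcst (fun _ => nu)) (fcomp (scl sd2) Zf)).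
Definition F2g := gadd (coord I2) (gmul (gcst nu) (gcomp (scl_lim sd2) Zg)).
Definition F1f := fadd (fadd (fco I1) (fmul (fcst (fun _ => mu)) Sef))
                       (fmul (fcst (fun _ => kap)) (fcomp (scl dpsi) Zf)).
Definition F1g := gadd (gadd (coord I1) (gmul (gcst mu) Seg))
                       (gmul (gcst kap) (gcomp (scl_lim dpsi) Zg)).

Hypothesis Hpsi : Smooth1 dpsi.
Hypothesis Hpsi0 : dpsi 0%nat 0 = 0.

Lemma Fam_sdp : Fam1 (scl sdp) (scl_lim sdp).
Proof. apply Fam1_scl. apply Smooth1_sd. apply sd_0. Qed.
Lemma Fam_sd2 : Fam1 (scl sd2) (scl_lim sd2).
Proof. apply Fam1_scl. apply Smooth1_sd. apply sd_0. Qed.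
Lemma Fam_psi : Fam1 (scl dpsi) (scl_lim dpsi).
Proof. apply Fam1_scl; auto. Qed.

Ltac fin := repeat match goal with
  | |- Fk _ (fadd _ _) _ => apply Fk_add
  | |- Fk _ (fmul _ _) _ => apply Fk_mul
  | |- Fk _ (fco _) _ => apply Fk_coord
  | |- Fk _ (fcst _) _ => apply Fk_const; first [apply cvr_cst | apply cvr_inv2]
  | |- Fk _ (fcomp _ _) _ => apply Fk_comp; [first [apply Fam_sdp | apply Fam_sd2 | apply Fam_psi]|]
  end.

Lemma Zfin k : Fk k Zf Zg.
Proof. unfold Zf, Zg, s1f, s1g, Sef, Seg. fin. Qed.
Lemma F2fin k : Fk k F2f F2g.
Proof. unfold F2f, F2g. fin. apply Zfin. Qed.
Lemma F1fin k : Fk k F1f F1g.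
Proof. unfold F1f, F1g, Sef, Seg. fin. apply Zfin. Qed.
End Fams.


Lemma scl_sd0 a n t : scl (sd a 0) n 0 t = INR n * sin (a * (t * / INR n)).
Proof. unfold scl, sd. replace (a * (t * / INR n) + 0 + INR 0 * (PI / 2)) with (a * (t * / INR n)) by (simpl; ring). simpl. ring. Qed.

Lemma scl_psi0 psi n t : scl (dpsi psi) n 0 t = INR n * psi (t * / INR n).
Proof. unfold scl, dpsi. simpl. ring. Qed.

Lemma Zf_eq delta beta sg n xi eta zeta : Zf delta beta sg n (xi, eta, zeta) =
  zeta + -2 * ((INR n * sin (PI * (xi * / INR n))) * (INR n * sin (PI * (xi * / INR n)))) + delta
  + (0 + -2 * delta * (/ INR n) ^ 2) * ((INR n * sin (PI * (xi * / INR n))) * (INR n * sin (PI * (xi * / INR n))))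
  + (- (sg * beta) + - (sg * beta) * delta * (/ INR n) ^ 2) * (INR n * sin (2 * PI * (eta * / INR n))).
Proof.
  unfold Zf, s1f, Sef, fadd, gadd, fmul, gmul, fcst, gcst, fco, fcomp, gcomp, sdp, sd2.
  rewrite !scl_sd0. reflexivity.
Qed.

Lemma psi_nat psi (H : forall z, psi (z + 1) = psi z + 1) z n : psi (z + INR n) = psi z + INR n.
Proof.
  induction n. - simpl. rewrite Rplus_0_r. ring.
  - rewrite S_INR. replace (z + (INR n + 1)) with ((z + INR n) + 1) by ring. rewrite H, IHn. ring.
Qed.

Section Cases.
Variables (psi : R -> R) (mu nu delta beta : R).
Hypothesis psi_deg1 : forall z, psi (z + 1) = psi z + 1.
Hypothesis psi_odd : forall z, psi (- z) = - psi z.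

Lemma cos2 x n : cos (2 * PI * (x / INR n)) = 1 - 2 * sin (PI * (x * / INR n)) * sin (PI * (x * / INR n)).
Proof. rewrite <- cos_2a_sin. f_equal. unfold Rdiv. ring. Qed.

Lemma sin2 x n : sin (2 * PI * (x / INR n)) = sin (2 * PI * (x * / INR n)).
Proof. reflexivity. Qed.

Lemma case_Pplus n xi eta zeta : (1 <= n)%nat ->
  f_star psi mu nu beta delta Defs.Pplus n (xi, eta, zeta) =
  (F1f psi mu delta beta 1 1 n (xi, eta, zeta), F2f nu delta beta 1 n (xi, eta, zeta),
   Zf delta beta 1 n (xi, eta, zeta)).
Proof.
  intro Hn. assert (HN : INR n <> 0) by (apply not_0_INR; lia).
  unfold F1f, F2f, Sef, sd2, fadd, gadd, fmul, gmul, fcst, gcst, fco, fcomp, gcomp.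
  rewrite !scl_sd0, scl_psi0. set (Zv := Zf delta beta 1 n (xi, eta, zeta)).
  assert (EZ := Zf_eq delta beta 1 n xi eta zeta). fold Zv in EZ.
  unfold f_star, to_orig, f_lift, remove_jump, to_scaled, jump_sign. cbv zeta.
  rewrite cos2, sin2.
  set (zz := zeta / INR n + (INR n + delta / INR n) *
       (1 - 2 * sin (PI * (xi * / INR n)) * sin (PI * (xi * / INR n)) -
        beta / INR n * sin (2 * PI * (eta * / INR n)))).
  assert (Hz : zz = Zv * / INR n + INR n) by (unfold zz; rewrite EZ; field; auto).
  rewrite Hz. simpl coord.
  replace (2 * PI * (Zv * / INR n + INR n)) with (2 * PI * (Zv * / INR n) + 2 * INR n * PI) by ring.
  rewrite sin_period, psi_nat by auto.
  f_equal; [f_equal|]; field; auto.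
Qed.
Lemma sin_mper w n : sin (w - 2 * INR n * PI) = sin w.
Proof. rewrite <- (sin_period (w - 2 * INR n * PI) n). f_equal. ring. Qed.

Lemma psi_nat_neg z n : psi (z - INR n) = psi z - INR n.
Proof. pose proof (psi_nat psi psi_deg1 (z - INR n) n). replace (z - INR n + INR n) with z in H by ring. lra. Qed.

Lemma cosPm x n : cos (2 * PI * (/ 2 - x / INR n)) = - (1 - 2 * sin (PI * (x * / INR n)) * sin (PI * (x * / INR n))).
Proof.
  replace (2 * PI * (/ 2 - x / INR n)) with (- (2 * (PI * (x * / INR n))) + PI) by (unfold Rdiv; generalize (x * / INR n); intro; field).
  rewrite neg_cos, cos_neg, cos_2a_sin. ring.
Qed.
Lemma cosPp x n : cos (2 * PI * (/ 2 + x / INR n)) = - (1 - 2 * sin (PI * (x * / INR n)) * sin (PI * (x * / INR n))).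
Proof.
  replace (2 * PI * (/ 2 + x / INR n)) with (2 * (PI * (x * / INR n)) + PI) by (unfold Rdiv; generalize (x * / INR n); intro; field).
  rewrite neg_cos, cos_2a_sin. ring.
Qed.
Lemma cosN x n : cos (2 * PI * - (x / INR n)) = 1 - 2 * sin (PI * (x * / INR n)) * sin (PI * (x * / INR n)).
Proof.
  replace (2 * PI * - (x / INR n)) with (- (2 * (PI * (x * / INR n)))) by (unfold Rdiv; ring).
  rewrite cos_neg, cos_2a_sin. ring.
Qed.
Lemma sinN x n : sin (2 * PI * - (x / INR n)) = - sin (2 * PI * (x * / INR n)).
Proof. replace (2 * PI * - (x / INR n)) with (- (2 * PI * (x * / INR n))) by (unfold Rdiv; ring). apply sin_neg. Qed.
Lemma sinPp x n : sin (2 * PI * (/ 2 + x / INR n)) = - sin (2 * PI * (x * / INR n)).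
Proof. replace (2 * PI * (/ 2 + x / INR n)) with (2 * PI * (x * / INR n) + PI) by (unfold Rdiv; generalize (x * / INR n); intro; field). apply neg_sin. Qed.
Lemma sinPm x n : sin (2 * PI * (/ 2 - x / INR n)) = sin (2 * PI * (x * / INR n)).
Proof.
  replace (2 * PI * (/ 2 - x / INR n)) with (- (2 * PI * (x * / INR n)) + PI) by (unfold Rdiv; generalize (x * / INR n); intro; field).
  rewrite neg_sin, sin_neg. ring.
Qed.

Ltac prep sg kap :=
  let Hn := fresh in let HN := fresh "HN" in
  intro Hn; match goal with |- context [f_star _ _ _ _ _ _ ?n _] =>
    assert (HN : INR n <> 0) by (apply not_0_INR; lia) end;
  unfold F1f, F2f, Sef, sd2, fadd, gadd, fmul, gmul, fcst, gcst, fco, fcomp, gcomp;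
  rewrite !scl_sd0, scl_psi0;
  match goal with |- context [Zf ?d ?b ?s ?n ?q] => set (Zv := Zf d b s n q);
    let EZ := fresh "EZ" in
    match q with (?x, ?y, ?z) => assert (EZ := Zf_eq d b s n x y z) end; fold Zv in EZ end;
  unfold f_star, to_orig, f_lift, remove_jump, to_scaled, jump_sign; cbv zeta;
  repeat first [rewrite cos2 | rewrite sin2 | rewrite cosPm | rewrite cosPp | rewrite cosN
               | rewrite sinN | rewrite sinPp | rewrite sinPm];
  match goal with |- context [psi ?z] => set (zz := z) end.

Lemma case_Pminus n xi eta zeta : (1 <= n)%nat ->
  f_star psi mu nu beta delta Defs.Pminus n (xi, eta, zeta) =
  (F1f psi mu delta beta 1 1 n (xi, eta, zeta), F2f nu delta beta 1 n (xi, eta, zeta),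
   Zf delta beta 1 n (xi, eta, zeta)).
Proof.
  prep 1 1.
  assert (Hz : zz = - (Zv * / INR n) - INR n) by (unfold zz; rewrite EZ; field; auto).
  rewrite Hz. simpl coord.
  replace (2 * PI * (- (Zv * / INR n) - INR n)) with (- (2 * PI * (Zv * / INR n)) - 2 * INR n * PI) by ring.
  rewrite sin_mper, sin_neg, psi_nat_neg, psi_odd.
  f_equal; [f_equal|]; field; auto.
Qed.

Lemma case_Qplus n xi eta zeta : (1 <= n)%nat ->
  f_star psi mu nu beta delta Defs.Qplus n (xi, eta, zeta) =
  (F1f psi mu delta beta (-1) (-1) n (xi, eta, zeta), F2f nu delta beta (-1) n (xi, eta, zeta),
   Zf delta beta (-1) n (xi, eta, zeta)).
Proof.
  prep 1 1.
  assert (Hz : zz = Zv * / INR n + INR n) by (unfold zz; rewrite EZ; field; auto).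
  rewrite Hz. simpl coord.
  replace (2 * PI * (Zv * / INR n + INR n)) with (2 * PI * (Zv * / INR n) + 2 * INR n * PI) by ring.
  rewrite sin_period, psi_nat by auto.
  f_equal; [f_equal|]; field; auto.
Qed.

Lemma case_Qminus n xi eta zeta : (1 <= n)%nat ->
  f_star psi mu nu beta delta Defs.Qminus n (xi, eta, zeta) =
  (F1f psi mu delta beta (-1) (-1) n (xi, eta, zeta), F2f nu delta beta (-1) n (xi, eta, zeta),
   Zf delta beta (-1) n (xi, eta, zeta)).
Proof.
  prep 1 1.
  assert (Hz : zz = - (Zv * / INR n) - INR n) by (unfold zz; rewrite EZ; field; auto).
  rewrite Hz. simpl coord.
  replace (2 * PI * (- (Zv * / INR n) - INR n)) with (- (2 * PI * (Zv * / INR n)) - 2 * INR n * PI) by ring.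
  rewrite sin_mper, sin_neg, psi_nat_neg, psi_odd.
  f_equal; [f_equal|]; field; auto.
Qed.
End Cases.


Lemma conv_from F G : (forall c, Finf (fun n p => coord c (F n p)) (fun p => coord c (G p))) ->
  conv_with_derivs (ball0 1) F G.
Proof.
  intros H c l. destruct (H c (length l) l (le_n _)) as [g [Hg [_ Hc]]].
  exists g. split; [apply HP_restrict; auto|].
  intros e He. destruct (Hc e He) as [N HN]. exists N. intros n Hn.
  destruct (HN n Hn) as [gn [H1 H2]]. exists gn. split; [apply HP_restrict; auto|]. exact H2.
Qed.

Lemma limits psi mu nu delta beta sg kap (H1 : dpsi psi 1 0 = 0) p :
  Zg delta beta sg p = coord I3 (quad_limit mu nu beta delta sg p) /\
  F2g nu delta beta sg p = coord I2 (quad_limit mu nu beta delta sg p) /\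
  F1g psi mu delta beta sg kap p = coord I1 (quad_limit mu nu beta delta sg p).
Proof.
  destruct p as [[x y] z].
  unfold F1g, F2g, Zg, s1g, Seg, gadd, gmul, gcst, gcomp. simpl scl_lim.
  unfold sdp, sd2. rewrite !sd_1. assert (H1b : Derive (fun x0 => psi x0) 0 = 0) by exact H1. rewrite H1b. simpl. split; [|split]; ring.
Qed.

Lemma all_conv psi mu nu delta beta pt sg kap
  (Hps : Smooth1 (dpsi psi)) (H0 : dpsi psi 0 0 = 0) (H1 : dpsi psi 1 0 = 0)
  (Hcase : forall n q, (1 <= n)%nat -> f_star psi mu nu beta delta pt n q =
      (F1f psi mu delta beta sg kap n q, F2f nu delta beta sg n q, Zf delta beta sg n q)) :
  conv_with_derivs (ball0 1) (fun n => f_star psi mu nu beta delta pt n)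
       (quad_limit mu nu beta delta sg).
Proof.
  apply conv_from. intros c k.
  assert (HG : forall c0, (fun p => coord c0 (quad_limit mu nu beta delta sg p)) =
     match c0 with I1 => F1g psi mu delta beta sg kap | I2 => F2g nu delta beta sg | I3 => Zg delta beta sg end).
  { intro c0. apply functional_extensionality. intro p.
    destruct (limits psi mu nu delta beta sg kap H1 p) as [E3 [E2 E1]]. destruct c0; auto. }
  rewrite HG.
  destruct c.
  - eapply Fk_ev; [apply F1fin; auto|].
    exists 1%nat. intros n Hn. apply functional_extensionality. intro q. rewrite Hcase by auto. reflexivity.
  - eapply Fk_ev; [apply F2fin; auto|].
    exists 1%nat. intros n Hn. apply functional_extensionality. intro q. rewrite Hcase by auto. reflexivity.
  - eapply Fk_ev; [apply Zfin; auto|].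
    exists 1%nat. intros n Hn. apply functional_extensionality. intro q. rewrite Hcase by auto. reflexivity.
Qed.


Definition diagA (al b c : R) (i j : idx3) : R :=
  match i, j with I1, I1 => al | I2, I2 => b | I3, I3 => c | _, _ => 0 end.

Lemma lin3_diag al b c p : lin3 (diagA al b c) p = (al * coord I1 p, b * coord I2 p, c * coord I3 p).
Proof. unfold lin3, diagA. f_equal; [f_equal|]; ring. Qed.

Lemma conj_general mu nu beta delta s phi a' al b c :
  0 < mu -> 0 < nu -> 0 < delta -> 0 < phi ->
  c = phi / delta -> b = phi ^ 2 / (2 * PI * nu * delta) -> al = phi ^ 3 / (4 * PI ^ 2 * mu * nu * delta) ->
  phi * al ^ 2 = 2 * PI ^ 2 * c -> phi * a' * b = 2 * PI * s * beta * c ->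
  lin_conj (quad_limit mu nu beta delta s) (michelson phi a').
Proof.
  intros Hmu Hnu Hd Hphi Ec Eb Eal E2 E3.
  pose proof PI_RGT_0 as HPI.
  assert (Hc : 0 < c) by (rewrite Ec; apply Rdiv_lt_0_compat; lra).
  assert (Hb : 0 < b).
  { rewrite Eb; apply Rdiv_lt_0_compat; [apply pow_lt; lra|].
    repeat match goal with |- 0 < _ * _ => apply Rmult_lt_0_compat end; lra. }
  assert (HP2 : 0 < PI ^ 2) by (apply pow_lt; lra).
  assert (Hal : 0 < al).
  { rewrite Eal; apply Rdiv_lt_0_compat; [apply pow_lt; lra|].
    repeat match goal with |- 0 < _ * _ => apply Rmult_lt_0_compat end; lra. }
  exists (diagA al b c). split.
  - replace (det3 (diagA al b c)) with (al * (b * c)) by (unfold det3, diagA; ring).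
    apply Rgt_not_eq. unfold Rgt. repeat match goal with |- 0 < _ * _ => apply Rmult_lt_0_compat end; lra.
  - intros [[x y] z]. rewrite !lin3_diag. unfold michelson, quad_limit. simpl coord. cbv zeta.
    assert (Hw : c * z + phi * (1 - (al * x) ^ 2 - a' * (b * y)) =
       c * (z + delta - 2 * (PI * (PI * 1)) * (x * (x * 1)) - 2 * PI * s * beta * y)).
    { replace (c * z + phi * (1 - (al * x) ^ 2 - a' * (b * y))) with
        (c * z + phi - (phi * al ^ 2) * x ^ 2 - (phi * a' * b) * y) by ring.
      rewrite E2, E3, Ec. field. lra. }
    rewrite Hw. apply pair_equal_spec; split; [apply pair_equal_spec; split|reflexivity].
    + rewrite Eb, Eal. field. repeat split; lra.
    + rewrite Eb, Ec. field. repeat split; lra.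
Qed.


Lemma Rpower_pos x y : 0 < Rpower x y.
Proof. unfold Rpower. apply exp_pos. Qed.

Lemma rpow_n_inv X (m : nat) : 0 < X -> (0 < m)%nat -> Rpower (Rpower X (/ INR m)) (INR m) = X.
Proof.
  intros HX Hm. rewrite Rpower_mult. rewrite Rinv_l. apply Rpower_1; auto.
  apply not_0_INR. lia.
Qed.

Theorem corollary1
  (psi : R -> R)
  (psi_analytic : real_analytic psi)
  (psi_deg1 : forall z, psi (z + 1) = psi z + 1)
  (psi_odd : forall z, psi (- z) - (- z) = - (psi z - z))
  (psi_per1 : forall z, psi (z + 1) - (z + 1) = psi z - z)
  (psi_0 : psi 0 = 0)
  (dpsi_0 : derivable_pt_lim psi 0 0)
  (mu nu delta beta : R)
  (hmu : 0 < mu) (hnu : 0 < nu) (hdelta : 0 < delta)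
  (pt : accel) :
  let phi := PI * Rpower (32 * mu ^ 2 * nu ^ 2 * delta) (/ 6) in
  let a := beta * Rpower (2 * nu / (delta * mu ^ 2)) (/ 3) in
  (exists r : R, 0 < r /\
     conv_with_derivs (ball0 r) (fun n => f_star psi mu nu beta delta pt n)
       (quad_limit mu nu beta delta (accel_sign pt)))
  /\ lin_conj (quad_limit mu nu beta delta (accel_sign pt)) (michelson phi (accel_sign pt * a)).
Proof.
  intros phi a. split.
  - exists 1. split; [lra|].
    assert (Hps : Smooth1 (dpsi psi)) by (apply analytic_smooth; exact psi_analytic).
    assert (H0 : dpsi psi 0 0 = 0) by exact psi_0.
    assert (H1 : dpsi psi 1 0 = 0).
    { unfold dpsi. simpl. apply is_derive_unique. apply is_derive_Reals. exact dpsi_0. }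
    assert (Hodd : forall z, psi (- z) = - psi z) by (intro z; pose proof (psi_odd z); lra).
    destruct pt; simpl accel_sign.
    + apply (all_conv psi mu nu delta beta Defs.Pplus 1 1); auto.
      intros n [[x y] z] Hn. apply case_Pplus; auto.
    + apply (all_conv psi mu nu delta beta Defs.Pminus 1 1); auto.
      intros n [[x y] z] Hn. apply case_Pminus; auto.
    + apply (all_conv psi mu nu delta beta Defs.Qplus (-1) (-1)); auto.
      intros n [[x y] z] Hn. apply case_Qplus; auto.
    + apply (all_conv psi mu nu delta beta Defs.Qminus (-1) (-1)); auto.
      intros n [[x y] z] Hn. apply case_Qminus; auto.
  - pose proof PI_RGT_0 as HPI.
    set (X := 32 * mu ^ 2 * nu ^ 2 * delta).
    assert (HX : 0 < X) by (unfold X; pose proof (pow_lt mu 2 hmu); pose proof (pow_lt nu 2 hnu);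
       repeat match goal with |- 0 < _ * _ => apply Rmult_lt_0_compat end; lra).
    set (r6 := Rpower X (/ 6)).
    assert (Hr6 : 0 < r6) by apply Rpower_pos.
    assert (Hphi : phi = PI * r6) by reflexivity.
    assert (Hphip : 0 < phi) by (rewrite Hphi; apply Rmult_lt_0_compat; lra).
    assert (H6 : r6 ^ 6 = X).
    { rewrite <- (Rpower_pow 6 r6 Hr6). unfold r6.
      replace (/ 6) with (/ INR 6) by (f_equal; simpl; ring).
      apply rpow_n_inv; auto; lia. }
    assert (H2 : r6 ^ 2 = Rpower X (/ 3)).
    { rewrite <- (Rpower_pow 2 r6 Hr6). unfold r6. rewrite Rpower_mult. f_equal. simpl. field. }
    set (R3 := Rpower (2 * nu / (delta * mu ^ 2)) (/ 3)).
    assert (HR3 : R3 * r6 ^ 2 = 4 * nu).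
    { rewrite H2. unfold R3. rewrite Rpower_mult_distr.
      - replace (2 * nu / (delta * mu ^ 2) * X) with (Rpower (4 * nu) (INR 3)).
        + rewrite Rpower_mult. replace (INR 3 * / 3) with 1 by (simpl; field). apply Rpower_1. lra.
        + rewrite Rpower_pow by lra. unfold X. simpl. field. split; lra.
      - apply Rdiv_lt_0_compat; [lra|]. pose proof (pow_lt mu 2 hmu). nra.
      - exact HX. }
    apply (conj_general mu nu beta delta (accel_sign pt) phi (accel_sign pt * a)
      (phi ^ 3 / (4 * PI ^ 2 * mu * nu * delta)) (phi ^ 2 / (2 * PI * nu * delta)) (phi / delta));
      auto.
    + rewrite Hphi. unfold Rdiv.
      replace (PI * r6 * ((PI * r6) ^ 3 * / (4 * PI ^ 2 * mu * nu * delta)) ^ 2) with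
        (PI ^ 7 * r6 ^ 6 * r6 / (16 * PI ^ 4 * mu ^ 2 * nu ^ 2 * delta ^ 2)) by (field; repeat split; lra).
      rewrite H6. unfold X. field. repeat split; lra.
    + unfold a. fold R3.
      replace (phi * (accel_sign pt * (beta * R3)) * (phi ^ 2 / (2 * PI * nu * delta))) with
        (accel_sign pt * beta * phi * (R3 * r6 ^ 2) * PI ^ 2 / (2 * PI * nu * delta))
        by (rewrite Hphi; field; repeat split; lra).
      rewrite HR3. field. repeat split; lra.
Qed.
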